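(* Let $\mathcal{H}$ be a separable, infinite dimensional, complex Hilbert space. Suppose that $T\in\mathcal{B}(\mathcal{H}\oplus\mathcal{H})$ and that $\mathcal{H}\oplus\{0\}$ is an invariant subspace for $T$. Let $B=T|_{\mathcal{H}\oplus\{0\}}\in\mathcal{B}(\mathcal{H}\oplus\{0\})$. Then there exists a sequence $(W_{n})_{n\geq1}$ of unitary operators from $\mathcal{H}\oplus\mathcal{H}$ onto $\mathcal{H}\oplus\{0\}$ such that $W_{n}TW_{n}^{*}\to B$ in the strong operator topology. *)

(* Defs.v *)
From HB Require Import structures.
From mathcomp Require Import all_boot all_order all_algebra complex.
From mathcomp Require Import reals.
Set Implicit Arguments. Unset Strict Implicit. Unset Printing Implicit Defensive.
Import Order.TTheory GRing.Theory Num.Theory.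
Local Open Scope ring_scope.

Definition hnorm (R : realType) (U : lmodType R[i]) (ip : U -> U -> R[i]) (x : U) : R :=
  Num.sqrt (complex.Re (ip x x)).

Section Hilbert.
Variables (R : realType) (V : lmodType R[i]).

Definition is_inner_product (ip : V -> V -> R[i]) : Prop :=
  [/\ forall (a : R[i]) (x x' y : V), ip (a *: x + x') y = a * ip x y + ip x' y,
      forall x y : V, ip y x = (ip x y)^*,
      forall x : V, 0 <= ip x x
    & forall x : V, ip x x = 0 -> x = 0].


Definition hcvg_to (ip : V -> V -> R[i]) (u : nat -> V) (l : V) : Prop :=
  forall e : R, 0 < e -> exists N : nat, forall n : nat, (N <= n)%N ->
    hnorm ip (u n - l) < e.

Definition hcauchy (ip : V -> V -> R[i]) (u : nat -> V) : Prop :=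
  forall e : R, 0 < e -> exists N : nat, forall m n : nat, (N <= m)%N -> (N <= n)%N ->
    hnorm ip (u m - u n) < e.

Definition is_hilbert (ip : V -> V -> R[i]) : Prop :=
  is_inner_product ip /\
  forall u : nat -> V, hcauchy ip u -> exists l : V, hcvg_to ip u l.

Definition separable (ip : V -> V -> R[i]) : Prop :=
  exists d : nat -> V, forall (x : V) (e : R), 0 < e ->
    exists n : nat, hnorm ip (x - d n) < e.

Definition infinite_dimensional : Prop :=
  ~ exists (n : nat) (v : 'I_n -> V), forall x : V,
      exists c : 'I_n -> R[i], x = \sum_(k < n) c k *: v k.

Definition ip_sum (ip : V -> V -> R[i]) (z z' : (V * V)%type) : R[i] :=
  ip z.1 z'.1 + ip z.2 z'.2.

Definition bounded_op_sum (ip : V -> V -> R[i]) (T : (V * V)%type -> (V * V)%type) : Prop :=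
  linear T /\ exists M : R, forall z : (V * V)%type,
    hnorm (ip_sum ip) (T z) <= M * hnorm (ip_sum ip) z.

(* W : H (+) H -> H (+) {0} (the latter identified with H via (x,0) <-> x)
   is unitary with adjoint Wadj, i.e. Wadj is the adjoint of W and
   Wadj W = I, W Wadj = I *)
Definition unitary_sum_to (ip : V -> V -> R[i])
    (W : (V * V)%type -> V) (Wadj : V -> (V * V)%type) : Prop :=
  [/\ linear W,
      forall (z : (V * V)%type) (x : V), ip (W z) x = ip_sum ip z (Wadj x),
      forall z : (V * V)%type, Wadj (W z) = z
    & forall x : V, W (Wadj x) = x].

Definition first_summand_invariant (T : (V * V)%type -> (V * V)%type) : Prop :=
  forall x : V, (T (x, 0)).2 = 0.

(* B = T restricted to H (+) {0}, viewed (via (x,0) <-> x) as an operator on H *)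
Definition restr_first (T : (V * V)%type -> (V * V)%type) (x : V) : V :=
  (T (x, 0)).1.

End Hilbert.

(* Main.v *)
Require Import Defs.
From HB Require Import structures.
From mathcomp Require Import all_boot all_order all_algebra complex.
From mathcomp Require Import boolp classical_sets reals.
From mathcomp Require Import ring lra.
Set Implicit Arguments. Unset Strict Implicit. Unset Printing Implicit Defensive.
Import Order.TTheory GRing.Theory Num.Theory.
Local Open Scope ring_scope.
Local Notation "x %:C" := (x%:C)%C : ring_scope.
Local Notation Re := complex.Re.

Lemma ReD (R : realType) (a b : R[i]) : Re (a + b) = Re a + Re b.
Proof. by case: a; case: b. Qed.
Lemma ReN (R : realType) (a : R[i]) : Re (- a) = - Re a.
Proof. by case: a. Qed.
Lemma ReB (R : realType) (a b : R[i]) : Re (a - b) = Re a - Re b.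
Proof. by rewrite ReD ReN. Qed.
Lemma ReRM (R : realType) (r : R) (a : R[i]) : Re (r%:C * a) = r * Re a.
Proof. by case: a => x y; simpc. Qed.
Lemma ReR (R : realType) (r : R) : Re (r%:C) = r.
Proof. by []. Qed.
Lemma Re0 (R : realType) : Re (0 : R[i]) = 0.
Proof. by []. Qed.
Lemma Re_sum (R : realType) (n : nat) (F : 'I_n -> R[i]) :
  Re (\sum_(k < n) F k) = \sum_(k < n) Re (F k).
Proof. exact: (big_morph _ (@ReD R) (@Re0 R)). Qed.
Lemma ge0_RC (R : realType) (a : R[i]) : 0 <= a -> a = (Re a)%:C.
Proof. move=> h; have := ger0_Im h; case: a {h} => x y /= ->; done. Qed.
Lemma RC_ge0 (R : realType) (a : R[i]) : 0 <= a -> 0 <= Re a.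
Proof. move=> h; move: (h); rewrite (ge0_RC h) lecE /= => /andP[_]. by []. Qed.

Definition cn2 (R : realType) (a : R[i]) : R := Re (a * a^*).
Lemma cn2E (R : realType) (a : R[i]) : cn2 a = Re a ^+ 2 + complex.Im a ^+ 2.
Proof. by case: a => x y; rewrite /cn2; simpc => /=; rewrite !expr2. Qed.
Lemma cn2_ge0 (R : realType) (a : R[i]) : 0 <= cn2 a.
Proof. by rewrite cn2E addr_ge0 // sqr_ge0. Qed.
Lemma cn2_eq0 (R : realType) (a : R[i]) : cn2 a = 0 -> a = 0.
Proof.
rewrite cn2E => h.
have h1 : Re a ^+ 2 = 0 by apply/eqP; rewrite eq_le sqr_ge0 andbT -h lerDl sqr_ge0.
have h2 : complex.Im a ^+ 2 = 0 by move: h; rewrite h1 add0r.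
move/eqP: h1; move/eqP: h2; rewrite !sqrf_eq0 => /eqP h2 /eqP h1.
by case: a h h1 h2 => x y /= _ -> ->.
Qed.
Lemma cn2_mulJ (R : realType) (a : R[i]) : a * a^* = (cn2 a)%:C.
Proof. by apply: ge0_RC; exact: mulcJ_ge0. Qed.
Lemma cn2M (R : realType) (a b : R[i]) : cn2 (a * b) = cn2 a * cn2 b.
Proof. rewrite !cn2E; case: a => x y; case: b => u v; simpc => /=; ring. Qed.
Lemma cn2R (R : realType) (r : R) : cn2 (r%:C) = r ^+ 2.
Proof. by rewrite cn2E /= expr0n addr0. Qed.
Lemma cjE (R : realType) (z : R[i]) : z^* = conjc z.
Proof. by []. Qed.
Lemma cjD (R : realType) (a b : R[i]) : (a + b)^* = a^* + b^*.
Proof. by rewrite !cjE; case: a => ? ?; case: b => ? ?; simpc; rewrite /conjc; apply/eqP; rewrite eq_complex /=; apply/andP; split; apply/eqP; ring. Qed.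
Lemma cjM (R : realType) (a b : R[i]) : (a * b)^* = a^* * b^*.
Proof. by rewrite !cjE; case: a => ? ?; case: b => ? ?; simpc; rewrite /conjc; apply/eqP; rewrite eq_complex /=; apply/andP; split; apply/eqP; ring. Qed.
Lemma cjN (R : realType) (a : R[i]) : (- a)^* = - a^*.
Proof. by rewrite !cjE; case: a => ? ?; simpc; rewrite /conjc; apply/eqP; rewrite eq_complex /=; apply/andP; split; apply/eqP; ring. Qed.
Lemma cj0 (R : realType) : (0 : R[i])^* = 0.
Proof. by rewrite !cjE; simpc; rewrite /conjc; apply/eqP; rewrite eq_complex /=; apply/andP; split; apply/eqP; ring. Qed.
Lemma cjK (R : realType) (a : R[i]) : (a^*)^* = a.
Proof. by rewrite !cjE; case: a => ? ?; simpc; rewrite /conjc; apply/eqP; rewrite eq_complex /=; apply/andP; split; apply/eqP; ring. Qed.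
Lemma cjR (R : realType) (r : R) : (r%:C)^* = r%:C.
Proof. by rewrite !cjE; simpc; rewrite /conjc; apply/eqP; rewrite eq_complex /=; apply/andP; split; apply/eqP; ring. Qed.
Lemma Re_cj (R : realType) (a : R[i]) : Re (a^*) = Re a.
Proof. by case: a. Qed.

Section IP.
Variables (R : realType) (V : lmodType R[i]) (ip : V -> V -> R[i]).
Hypothesis hip : is_inner_product ip.

Lemma ipDZl a x x' y : ip (a *: x + x') y = a * ip x y + ip x' y.
Proof. by case: hip. Qed.
Lemma ipC x y : ip y x = (ip x y)^*.
Proof. by case: hip. Qed.
Lemma ip_ge0 x : 0 <= ip x x.
Proof. by case: hip. Qed.
Lemma ip_eq0 x : ip x x = 0 -> x = 0.
Proof. by case: hip => _ _ _; apply. Qed.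

Lemma ip0l y : ip 0 y = 0.
Proof.
have := ipDZl 1 0 0 y; rewrite scaler0 addr0 mul1r => h.
by apply: (@addrI _ (ip 0 y)); rewrite -h addr0.
Qed.
Lemma ipDl x x' y : ip (x + x') y = ip x y + ip x' y.
Proof. by rewrite -[x in LHS]scale1r ipDZl mul1r. Qed.
Lemma ipZl a x y : ip (a *: x) y = a * ip x y.
Proof. by rewrite -[_ *: x]addr0 ipDZl ip0l addr0. Qed.
Lemma ipNl x y : ip (- x) y = - ip x y.
Proof. by rewrite -scaleN1r ipZl mulN1r. Qed.
Lemma ipBl x x' y : ip (x - x') y = ip x y - ip x' y.
Proof. by rewrite ipDl ipNl. Qed.
Lemma ipDr x y y' : ip x (y + y') = ip x y + ip x y'.
Proof. by rewrite ipC ipDl cjD -!ipC. Qed.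
Lemma ipZr a x y : ip x (a *: y) = a^* * ip x y.
Proof. by rewrite ipC ipZl cjM -ipC. Qed.
Lemma ip0r x : ip x 0 = 0.
Proof. by rewrite ipC ip0l cj0. Qed.
Lemma ipNr x y : ip x (- y) = - ip x y.
Proof. by rewrite ipC ipNl cjN -ipC. Qed.
Lemma ipBr x y y' : ip x (y - y') = ip x y - ip x y'.
Proof. by rewrite ipDr ipNr. Qed.
Lemma ip_suml n (F : nat -> V) y : ip (\sum_(k < n) F k) y = \sum_(k < n) ip (F k) y.
Proof.
elim: n => [|n IH]; first by rewrite !big_ord0 ip0l.
by rewrite !big_ord_recr /= ipDl IH.
Qed.
Lemma ip_sumr n (F : nat -> V) x : ip x (\sum_(k < n) F k) = \sum_(k < n) ip x (F k).
Proof.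
elim: n => [|n IH]; first by rewrite !big_ord0 ip0r.
by rewrite !big_ord_recr /= ipDr IH.
Qed.

Definition N x := Re (ip x x).
Local Notation hn := (hnorm ip).
Lemma ipxx x : ip x x = (N x)%:C.
Proof. exact: ge0_RC (ip_ge0 x). Qed.
Lemma N_ge0 x : 0 <= N x.
Proof. exact: RC_ge0 (ip_ge0 x). Qed.
Lemma N_eq0 x : N x = 0 -> x = 0.
Proof. by move=> h; apply: ip_eq0; rewrite ipxx h. Qed.
Lemma hn_ge0 x : 0 <= hn x.
Proof. exact: sqrtr_ge0. Qed.
Lemma hn_sqr x : hn x ^+ 2 = N x.
Proof. by rewrite sqr_sqrtr // N_ge0. Qed.
Lemma hnE x : hn x = Num.sqrt (N x).
Proof. by []. Qed.
Lemma hn_gt0 x : x != 0 -> 0 < hn x.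
Proof.
move=> h; rewrite lt_neqAle hn_ge0 andbT; apply/eqP => h0.
by move/eqP: h; apply; apply: N_eq0; rewrite -hn_sqr -h0 expr0n.
Qed.
Lemma hn0 : hn 0 = 0.
Proof. by rewrite /hnorm ip0l /= sqrtr0. Qed.
Lemma ND x y : N (x + y) = N x + N y + 2 * Re (ip x y).
Proof.
rewrite /N ipDl !ipDr !ReD (ipC y x) Re_cj.
by rewrite mulr2n mulrDl mul1r; lra.
Qed.
Lemma NZ a x : N (a *: x) = cn2 a * N x.
Proof.
rewrite /N ipZl ipZr mulrA ipxx cn2_mulJ.
by rewrite -rmorphM.
Qed.
Lemma NN x : N (- x) = N x.
Proof. by rewrite /N ipNl ipNr opprK. Qed.
Lemma hnN x : hn (- x) = hn x.
Proof. by rewrite !hnE NN. Qed.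
Lemma hnZ a x : hn (a *: x) = Num.sqrt (cn2 a) * hn x.
Proof. by rewrite !hnE NZ sqrtrM // cn2_ge0. Qed.

Lemma CS x y : Re (ip x y) <= hn x * hn y.
Proof.
have [->|y0] := eqVneq y 0; first by rewrite ip0r hn0 mulr0.
have Ny : 0 < N y by rewrite -hn_sqr exprn_gt0 // hn_gt0.
set r := Re (ip x y).
set t := r / N y.
have h := N_ge0 (x + (- t)%:C *: y).
rewrite ND NZ cn2R ipZr cjR ReRM -/r in h.
have h2 : r ^+ 2 <= N x * N y.
  have e : N x + (- t) ^+ 2 * N y + 2 * (- t * r) = N x - r ^+ 2 / N y.
    rewrite /t; field; exact: lt0r_neq0.
  by rewrite e subr_ge0 ler_pdivrMr // in h.
apply: (le_trans (ler_norm r)).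
rewrite -sqrtr_sqr !hnE -sqrtrM ?N_ge0 //.
by rewrite ler_sqrt // mulr_ge0 // N_ge0.
Qed.

Lemma hnD x y : hn (x + y) <= hn x + hn y.
Proof.
rewrite -(@ler_pXn2r _ 2) ?nnegrE ?addr_ge0 ?hn_ge0 //.
rewrite hn_sqr ND sqrrD !hn_sqr.
have := CS x y; nra.
Qed.
Lemma hnB x y : hn (x - y) <= hn x + hn y.
Proof. by rewrite -(hnN y) hnD. Qed.
End IP.

Section Ortho.
Variables (R : realType) (V : lmodType R[i]) (ip : V -> V -> R[i]).
Hypothesis hip : is_inner_product ip.
Local Notation N := (N ip).

Definition ortho_upto (f : nat -> V) n :=
  forall i j, (i < n)%N -> (j < n)%N -> ip (f i) (f j) = (i == j)%:R.

Definition S (f : nat -> V) m (a : nat -> R[i]) : V := \sum_(k < m) a k *: f k.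
Definition P (f : nat -> V) n x := S f n (fun k => ip x (f k)).

Variables (f : nat -> V) (n : nat).
Hypothesis hf : ortho_upto f n.

Lemma ipS_e m a j : (m <= n)%N -> (j < n)%N ->
  ip (S f m a) (f j) = if (j < m)%N then a j else 0.
Proof.
move=> mn jn; elim: m mn => [|m IH] mn.
  by rewrite /S big_ord0 (ip0l hip).
rewrite /S big_ord_recr /= (ipDl hip) (ipZl hip) -/(S f m a) IH ?(ltnW mn) // hf //.
case: (ltngtP j m) => [jm|jm|->].
- by rewrite ltnS (ltnW jm) ?(gtn_eqF jm) ?mulr0 addr0.
- by rewrite ltnS leqNgt jm /= ?(ltn_eqF jm) ?mulr0 addr0.
- by rewrite ?ltnn ltnSn ?eqxx ?mulr1 add0r.
Qed.

Lemma ip_S_r x m b : ip x (S f m b) = \sum_(k < m) (b k)^* * ip x (f k).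
Proof. by rewrite /S (ip_sumr hip _ (fun k => b k *: f k)) //; apply: eq_bigr => k _; rewrite (ipZr hip). Qed.
Lemma ip_S_l x m a : ip (S f m a) x = \sum_(k < m) a k * ip (f k) x.
Proof. by rewrite /S (ip_suml hip _ (fun k => a k *: f k)) //; apply: eq_bigr => k _; rewrite (ipZl hip). Qed.

Lemma N_S m a : (m <= n)%N -> N (S f m a) = \sum_(k < m) cn2 (a k).
Proof.
move=> mn; rewrite /Defs.hnorm /N ip_S_r Re_sum; apply: eq_bigr => k _.
rewrite ipS_e // ?(leq_trans (ltn_ord k)) // ?ltn_ord /cn2 mulrC //.
Qed.

Lemma N_Sdiff n0 m a : (n0 <= m)%N -> (m <= n)%N ->
  N (S f m a - S f n0 a) = \sum_(k < m) cn2 (a k) - \sum_(k < n0) cn2 (a k).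
Proof.
move=> h1 h2; set D := S f m a - S f n0 a.
have hD : ip D (S f n0 a) = 0.
  rewrite ip_S_r big1 // => k _.
  have kn0 : (k < n0)%N := ltn_ord k.
  have n0n := leq_trans h1 h2.
  rewrite /D (ipBl hip) !ipS_e ?h2 ?n0n ?(leq_trans kn0 n0n) ?kn0 ?(leq_trans kn0 h1) //.
  by rewrite subrr mulr0.
have := ND hip D (S f n0 a); rewrite hD /= mulr0 addr0 /D subrK.
by rewrite !N_S ?(leq_trans h1) // => ->; ring.
Qed.

Lemma ipP_e x j : (j < n)%N -> ip (x - P f n x) (f j) = 0.
Proof. by move=> jn; rewrite (ipBl hip) // /P ipS_e // jn subrr. Qed.

Lemma bessel x : \sum_(k < n) cn2 (ip x (f k)) <= N x.
Proof.
have hD : ip (x - P f n x) (P f n x) = 0.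
  rewrite /P ip_S_r big1 // => k _; by rewrite ipP_e // mulr0.
have := ND hip (x - P f n x) (P f n x); rewrite hD /= mulr0 addr0 subrK => ->.
by rewrite /P N_S // lerDr (N_ge0 hip).
Qed.
End Ortho.

Lemma mono_cauchy (R : realType) (F : nat -> R) (M : R) :
  (forall n, F n <= F n.+1) -> (forall n, F n <= M) ->
  forall eps, 0 < eps -> exists N, forall m n, (N <= n)%N -> (n <= m)%N -> F m - F n < eps.
Proof.
move=> hinc hb eps he.
have mono : forall n m, (n <= m)%N -> F n <= F m.
  move=> n m /subnK <-; elim: (m - n)%N => [|k IH]; first by rewrite add0n.
  by rewrite addSn; apply: le_trans IH (hinc _).
set E : set R := fun x => exists n, x = F n.
have hs : has_sup E.
  by split; [exists (F 0%N), 0%N | exists M => x [n ->]].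
have [x [N ->] hN] := sup_adherent he hs.
exists N => m n hn hnm.
have h1 : F m <= sup E by apply: sup_upper_bound => //; exists m.
have h2 := mono _ _ hn.
lra.
Qed.

Section Syn.
Variables (R : realType) (V : lmodType R[i]) (ip : V -> V -> R[i]).
Hypothesis hH : is_hilbert ip.
Let hip : is_inner_product ip := proj1 hH.
Local Notation N := (N ip).
Local Notation hn := (hnorm ip).

Lemma hnBC x y : hn (x - y) = hn (y - x).
Proof. by rewrite -(hnN hip (y - x)) opprB. Qed.

Lemma lt_hn x eps : 0 < eps -> N x < eps ^+ 2 -> hn x < eps.
Proof.
move=> he h; rewrite -(@ltr_pXn2r _ 2) ?nnegrE ?hn_ge0 ?(ltW he) //.
by rewrite (hn_sqr hip).
Qed.

Lemma small3 (D : R[i]) (w1 w2 w3 : V) :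
  (forall eps, 0 < eps -> exists u1 u2 u3, [/\ hn u1 < eps, hn u2 < eps, hn u3 < eps &
     D = ip u1 w1 + ip u2 w2 + ip u3 w3]) -> D = 0.
Proof.
move=> h; apply/eqP; apply/negP => /negP D0.
have c0 : 0 < cn2 D.
  rewrite lt_neqAle cn2_ge0 andbT eq_sym; apply/eqP => /cn2_eq0 /eqP.
  by move/negP: D0.
set s := Num.sqrt (cn2 D).
have s0 : 0 < s by rewrite sqrtr_gt0.
have ss : s ^+ 2 = cn2 D by rewrite sqr_sqrtr // ltW.
set K := hn w1 + hn w2 + hn w3 + 1.
have hw1 := hn_ge0 ip w1; have hw2 := hn_ge0 ip w2; have hw3 := hn_ge0 ip w3.
have K0 : 0 < K by rewrite /K; lra.
have [u1 [u2 [u3 [h1 h2 h3 hD]]]] := h (s / K) (divr_gt0 s0 K0).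
have hu1 := hn_ge0 ip u1; have hu2 := hn_ge0 ip u2; have hu3 := hn_ge0 ip u3.
have e : cn2 D = Re (ip u1 (D *: w1)) + Re (ip u2 (D *: w2)) + Re (ip u3 (D *: w3)).
  by rewrite !(ipZr hip) -!ReD /cn2 mulrC -!mulrDr -hD.
have b1 := CS hip u1 (D *: w1); have b2 := CS hip u2 (D *: w2).
have b3 := CS hip u3 (D *: w3).
rewrite !(hnZ hip) -/s in b1 b2 b3.
have hsK : s / K * K = s by rewrite divfK // lt0r_neq0.
have : cn2 D < s / K * s * K.
  rewrite e.
  have l1 : hn u1 * (s * hn w1) <= s / K * (s * hn w1) by apply: ler_wpM2r; [rewrite mulr_ge0 // ltW | exact: ltW].
  have l2 : hn u2 * (s * hn w2) <= s / K * (s * hn w2) by apply: ler_wpM2r; [rewrite mulr_ge0 // ltW | exact: ltW].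
  have l3 : hn u3 * (s * hn w3) <= s / K * (s * hn w3) by apply: ler_wpM2r; [rewrite mulr_ge0 // ltW | exact: ltW].
  have sK0 : 0 < s / K by exact: divr_gt0.
  have hK : hn w1 + hn w2 + hn w3 < K by rewrite /K; exact: (ltr_pwDr ltr01 (lexx _)).
  have : s / K * s * (hn w1 + hn w2 + hn w3) < s / K * s * K.
    by rewrite ltr_pM2l // mulr_gt0.
  nra.
have -> : s / K * s * K = s ^+ 2 by field; exact: lt0r_neq0.
by rewrite ss ltxx.
Qed.

Variables (e : nat -> V).
Hypothesis he : forall i j, ip (e i) (e j) = (i == j)%:R.
Lemma he_upto n : ortho_upto ip e n.
Proof. by move=> i j _ _; exact: he. Qed.


Definition ss (a : nat -> R[i]) := exists M, forall m, \sum_(k < m) cn2 (a k) <= M.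

Lemma S_cauchy a : ss a -> hcauchy ip (fun m => S e m a).
Proof.
move=> [M hM] eps hep.
have hinc : forall n, \sum_(k < n) cn2 (a k) <= \sum_(k < n.+1) cn2 (a k).
  by move=> n; rewrite big_ord_recr /= lerDl cn2_ge0.
have [K hK] := mono_cauchy hinc hM (exprn_gt0 2 hep).
exists K => m n hm hn.
wlog hnm : m n hm hn / (n <= m)%N.
  move=> W; case: (leqP n m) => [|/ltnW] h; first exact: W.
  by rewrite hnBC; exact: W.
apply: lt_hn => //.
rewrite (N_Sdiff hip (@he_upto m)) //.
exact: hK.
Qed.

Definition Syn (a : nat -> R[i]) : V :=
  match pselect (exists l, hcvg_to ip (fun m => S e m a) l) with
  | left h => proj1_sig (cid h)
  | right _ => 0
  end.

Lemma Syn_cvg a : ss a -> hcvg_to ip (fun m => S e m a) (Syn a).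
Proof.
move=> h; rewrite /Syn; case: pselect => [h1|h1]; first by case: (cid h1).
by exfalso; apply: h1; apply: (proj2 hH); exact: S_cauchy.
Qed.

Lemma coef_Syn a k : ss a -> ip (Syn a) (e k) = a k.
Proof.
move=> h; apply/eqP; rewrite -subr_eq0; apply/eqP.
apply: (@small3 _ (e k) 0 0) => eps hep.
have [N0 hN0] := Syn_cvg h hep.
set m := maxn N0 k.+1.
exists (Syn a - S e m a), 0, 0; split; rewrite ?hn0 //.
- by rewrite hnBC; apply: hN0; rewrite leq_maxl.
- have km : (k < m)%N by rewrite (leq_trans _ (leq_maxr _ _)).
  by rewrite !(ip0r hip) !addr0 (ipBl hip) (ipS_e hip (@he_upto m)) // km.
Qed.
End Syn.

Section Rearr.
Variable (n : nat).
Definition rearr {T : Type} (f g : nat -> T) k :=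
  if (k < n)%N then f k else if odd (k - n) then g (k - n)./2 else f (n + (k - n)./2)%N.
Definition bsel {T : Type} (c : nat -> T) k := if (k < n)%N then c k else c (n + (k - n).*2)%N.
Definition csel {T : Type} (c : nat -> T) j := c (n + j.*2)%N.+1.

Lemma rearr_ext T (f f' g g' : nat -> T) k : (forall j, f j = f' j) -> (forall j, g j = g' j) ->
  rearr f g k = rearr f' g' k.
Proof. by move=> hf hg; rewrite /rearr hf hg hf. Qed.
Lemma bsel_ext T (c c' : nat -> T) k : (forall j, c j = c' j) -> bsel c k = bsel c' k.
Proof. by move=> h; rewrite /bsel !h; case: ifP. Qed.
Lemma csel_ext T (c c' : nat -> T) k : (forall j, c j = c' j) -> csel c k = csel c' k.
Proof. by move=> h; rewrite /csel h. Qed.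

Lemma rearr_even T (f g : nat -> T) J : rearr f g (n + J.*2)%N = f (n + J)%N.
Proof.
rewrite /rearr ltnNge leq_addr /= addKn odd_double doubleK //.
Qed.
Lemma rearr_odd T (f g : nat -> T) J : rearr f g (n + J.*2)%N.+1 = g J.
Proof.
rewrite /rearr (_ : ((n + J.*2).+1 < n)%N = false); last by rewrite ltnNge leqW // leq_addr.
rewrite subSn ?leq_addr // addKn /= odd_double /=.
by rewrite uphalf_double.
Qed.
Lemma bsel_hi T (c : nat -> T) J : bsel c (n + J)%N = c (n + J.*2)%N.
Proof. by rewrite /bsel ltnNge leq_addr /= addKn. Qed.

Lemma bsel_rearr T (f g : nat -> T) k : bsel (rearr f g) k = f k.
Proof.
rewrite /bsel; case: ifP => h; first by rewrite /rearr h.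
by rewrite rearr_even subnKC // leqNgt h.
Qed.
Lemma csel_rearr T (f g : nat -> T) j : csel (rearr f g) j = g j.
Proof. exact: rearr_odd. Qed.
Lemma rearr_sel T (c : nat -> T) k : rearr (bsel c) (csel c) k = c k.
Proof.
rewrite /rearr; case: ifP => h; first by rewrite /bsel h.
have hk : (n <= k)%N by rewrite leqNgt h.
have -> : k = (n + (k - n))%N by rewrite subnKC.
rewrite addKn; set m := (k - n)%N.
rewrite -[in RHS](odd_double_half m).
case: (odd m) => /=.
  by rewrite /csel; f_equal; rewrite addnCA add1n.
by rewrite /bsel ltnNge leq_addr /= addKn.
Qed.

Lemma sum_rearr (A B : Type) (Z : nmodType) (Phi : A -> B -> Z) (f g : nat -> A) (h : nat -> B) J :
  \sum_(k < n + J.*2) Phi (rearr f g k) (h k) =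
  \sum_(k < n + J) Phi (f k) (bsel h k) + \sum_(k < J) Phi (g k) (csel h k).
Proof.
elim: J => [|J IH].
  rewrite !addn0 big_ord0 addr0 /=; apply: eq_bigr => k _.
  by rewrite /rearr /bsel ltn_ord.
rewrite doubleS !addnS !big_ord_recr /= IH rearr_even rearr_odd bsel_hi /csel.
rewrite -!addrA; congr (_ + _); rewrite addrC -!addrA; congr (_ + _).
by rewrite addrC.
Qed.

Lemma psum_mono (R : realType) (F : nat -> R) m d : (forall k, 0 <= F k) ->
  \sum_(k < m) F k <= \sum_(k < m + d) F k.
Proof.
move=> h; elim: d => [|d IH]; first by rewrite addn0.
by rewrite addnS big_ord_recr /=; apply: le_trans IH _; rewrite lerDl.
Qed.

Lemma ss_rearr (R : realType) (f g : nat -> R[i]) : ss f -> ss g -> ss (rearr f g).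
Proof.
move=> [Mf hf] [Mg hg]; exists (Mf + Mg) => m.
apply: le_trans (psum_mono (F := fun k => cn2 (rearr f g k)) m (n + m) (fun k => cn2_ge0 _)) _.
rewrite addnCA addnn.
rewrite (sum_rearr (fun a (_ : unit) => cn2 a) f g (fun _ => tt)).
exact: lerD.
Qed.

Lemma ss_bsel (R : realType) (c : nat -> R[i]) : ss c -> ss (bsel c).
Proof.
move=> [M hM]; exists M => m.
apply: le_trans (psum_mono (F := fun k => cn2 (bsel c k)) m n (fun k => cn2_ge0 _)) _.
rewrite addnC.
have := sum_rearr (fun a (_ : unit) => cn2 a) (bsel c) (csel c) (fun _ => tt) m.
under eq_bigr do rewrite rearr_sel.
move=> e; apply: le_trans (hM (n + m.*2)%N); rewrite e lerDl.
by apply: sumr_ge0 => k _; apply: cn2_ge0.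
Qed.

Lemma ss_csel (R : realType) (c : nat -> R[i]) : ss c -> ss (csel c).
Proof.
move=> [M hM]; exists M => m.
have := sum_rearr (fun a (_ : unit) => cn2 a) (bsel c) (csel c) (fun _ => tt) m.
under eq_bigr do rewrite rearr_sel.
move=> e; apply: le_trans (hM (n + m.*2)%N); rewrite e lerDr.
by apply: sumr_ge0 => k _; apply: cn2_ge0.
Qed.
End Rearr.

Section MainW.
Variables (R : realType) (V : lmodType R[i]) (ip : V -> V -> R[i]).
Hypothesis hH : is_hilbert ip.
Let hip : is_inner_product ip := proj1 hH.
Local Notation N := (N ip).
Local Notation hn := (hnorm ip).
Variables (e : nat -> V).
Hypothesis he : forall i j, ip (e i) (e j) = (i == j)%:R.
Hypothesis htot : forall y, (forall k, ip y (e k) = 0) -> y = 0.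

Definition coef x k := ip x (e k).

Lemma coef_inj u v : (forall k, coef u k = coef v k) -> u = v.
Proof.
move=> h; apply/eqP; rewrite -subr_eq0; apply/eqP; apply: htot => k.
by rewrite (ipBl hip); have := h k; rewrite /coef => ->; rewrite subrr.
Qed.

Lemma ss_coef x : ss (coef x).
Proof. exists (N x) => m; exact: (bessel hip (@he_upto _ _ _ e he m)). Qed.

Lemma Syn_coef x : Syn ip e (coef x) = x.
Proof. by apply: coef_inj => k; rewrite /coef coef_Syn //; exact: ss_coef. Qed.

Lemma P_cvg x : hcvg_to ip (fun m => S e m (coef x)) x.
Proof. by have := Syn_cvg hH he (ss_coef x); rewrite Syn_coef. Qed.

Definition W n (z : (V * V)%type) : V := Syn ip e (rearr n (coef z.1) (coef z.2)).
Definition Wadj n (x : V) : (V * V)%type :=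
  (Syn ip e (bsel n (coef x)), Syn ip e (csel n (coef x))).

Lemma coef_W n z k : coef (W n z) k = rearr n (coef z.1) (coef z.2) k.
Proof. by rewrite /coef coef_Syn //; apply: ss_rearr; apply: ss_coef. Qed.
Lemma coef_Wadj1 n x k : coef (Wadj n x).1 k = bsel n (coef x) k.
Proof. by rewrite /coef coef_Syn //; apply: ss_bsel; apply: ss_coef. Qed.
Lemma coef_Wadj2 n x k : coef (Wadj n x).2 k = csel n (coef x) k.
Proof. by rewrite /coef coef_Syn //; apply: ss_csel; apply: ss_coef. Qed.

Lemma W_linear n : linear (W n).
Proof.
move=> a u v; apply: coef_inj => k.
rewrite coef_W /coef (ipDZl hip) -!/(coef _ _) !coef_W /=.
rewrite /rearr /coef; case: ifP => _; first by rewrite (ipDZl hip).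
by case: ifP => _; rewrite (ipDZl hip).
Qed.

Lemma WadjK n z : Wadj n (W n z) = z.
Proof.
case: z => z1 z2; congr (_, _); apply: coef_inj => k.
- by rewrite coef_Wadj1 (bsel_ext _ _ (coef_W n _)) bsel_rearr.
- by rewrite coef_Wadj2 (csel_ext _ _ (coef_W n _)) csel_rearr.
Qed.

Lemma WK n x : W n (Wadj n x) = x.
Proof.
apply: coef_inj => k; rewrite coef_W.
by rewrite (rearr_ext n k (coef_Wadj1 n x) (coef_Wadj2 n x)) rearr_sel.
Qed.

Lemma ip_Sx m a x : ip (S e m a) x = \sum_(k < m) a k * (coef x k)^*.
Proof. by rewrite (ip_S_l hip); apply: eq_bigr => k _; rewrite (ipC hip). Qed.

Lemma W_adj n z x : ip (W n z) x = ip_sum ip z (Wadj n x).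
Proof.
rewrite /ip_sum; apply/eqP; rewrite -subr_eq0; apply/eqP.
apply: (@small3 _ _ _ hH _ x (Wadj n x).1 (Wadj n x).2) => eps hep.
have [N1 h1] := P_cvg (W n z) hep.
have [N2 h2] := P_cvg z.1 hep.
have [N3 h3] := P_cvg z.2 hep.
set J := (N1 + N2 + N3)%N.
exists (W n z - S e (n + J.*2) (coef (W n z))),
  (S e (n + J) (coef z.1) - z.1), (S e J (coef z.2) - z.2); split.
- rewrite (hnBC hH); apply: h1.
  by rewrite (leq_trans _ (leq_addl _ _)) // -addnn (leq_trans _ (leq_addl _ _)) // /J -addnA leq_addr.
- apply: h2; rewrite (leq_trans _ (leq_addl _ _)) // /J.
  by rewrite -addnA (leq_trans (leq_addr N3 N2)) // leq_addl.
- by apply: h3; rewrite /J leq_addl.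
rewrite !(ipBl hip) !ip_Sx.
have E := sum_rearr n (fun a b => a * b^*) (coef z.1) (coef z.2) (coef x) J.
have E' : \sum_(k < n + J.*2) coef (W n z) k * (coef x k)^* =
          \sum_(k < n + J) coef z.1 k * (coef (Wadj n x).1 k)^* +
          \sum_(k < J) coef z.2 k * (coef (Wadj n x).2 k)^*.
  under eq_bigr do rewrite coef_W.
  rewrite E; congr (_ + _); apply: eq_bigr => k _.
    by rewrite coef_Wadj1.
  by rewrite coef_Wadj2.
rewrite E'; ring.
Qed.

Lemma W_unitary n : unitary_sum_to ip (W n) (Wadj n).
Proof.
split.
- exact: W_linear.
- exact: W_adj.
- exact: WadjK.
- exact: WK.
Qed.
End MainW.

Lemma lin_sub (K : pzRingType) (U W : lmodType K) (f : U -> W) : linear f ->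
  forall u v, f (u - v) = f u - f v.
Proof. by move=> hf u v; rewrite -[u - v]addrC -scaleN1r hf scaleN1r addrC. Qed.

Lemma lin_add (K : pzRingType) (U W : lmodType K) (f : U -> W) : linear f ->
  forall u v, f (u + v) = f u + f v.
Proof. by move=> hf u v; have := hf 1 u v; rewrite !scale1r. Qed.

Section MainConv.
Variables (R : realType) (V : lmodType R[i]) (ip : V -> V -> R[i]).
Hypothesis hH : is_hilbert ip.
Let hip : is_inner_product ip := proj1 hH.
Local Notation hn := (hnorm ip).
Variables (e : nat -> V).
Hypothesis he : forall i j, ip (e i) (e j) = (i == j)%:R.
Hypothesis htot : forall y, (forall k, ip y (e k) = 0) -> y = 0.
Local Notation W := (W ip e).
Local Notation Wadj := (Wadj ip e).

Lemma W_iso n z : hn (W n z) = hnorm (ip_sum ip) z.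
Proof. by rewrite /hnorm (W_adj hH he htot) (WadjK hH he htot). Qed.

Lemma coef_S m a j : coef ip e (S e m a) j = if (j < m)%N then a j else 0.
Proof.
rewrite /coef (ipS_e hip (@he_upto _ _ _ e he (maxn m j.+1))) //.
  exact: leq_maxl.
exact: leq_maxr.
Qed.

Lemma W_P n y : W n (S e n (coef ip e y), 0) = S e n (coef ip e y).
Proof.
apply: (coef_inj hH htot) => k; rewrite (coef_W hH he) /= coef_S.
rewrite /rearr; case: ifP => hk; first by rewrite coef_S hk.
case: ifP => _; first by rewrite /coef (ip0l hip).
by rewrite coef_S ltnNge leq_addr.
Qed.

Lemma W_first_le n y : hn (W n (y, 0) - y) <= 2 * hn (y - S e n (coef ip e y)).
Proof.
set p := S e n (coef ip e y).
have e1 : W n (y, 0) = W n (y - p, 0) + p.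
  have hp : W n (p, 0) = p := W_P n y.
  rewrite -{2}hp -(lin_add (W_linear hH he htot n)); congr (W n _).
  have -> : (y - p, 0) + (p, 0) = ((y - p) + p, 0 + 0 : V) by [].
  by rewrite subrK addr0.
rewrite e1.
have -> : W n (y - p, 0) + p - y = W n (y - p, 0) - (y - p) by rewrite opprB addrA.
apply: le_trans (hnB hip _ _) _.
rewrite W_iso /hnorm /ip_sum /= (ip0l hip) addr0 -/(hnorm ip _) mulr2n mulrDl mul1r.
by [].
Qed.

Lemma W_first_cvg y : hcvg_to ip (fun n => W n (y, 0)) y.
Proof.
move=> eps hep.
have [N0 hN0] := P_cvg hH he htot y (divr_gt0 hep (ltr0Sn _ 1)).
exists N0 => n hNn.
apply: le_lt_trans (W_first_le n y) _.
have := hN0 n hNn; rewrite (hnBC hH) => h.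
rewrite -(ltr_pM2l (ltr0Sn _ 1)) in h.
apply: lt_le_trans h _; by rewrite mulrC divfK // pnatr_eq0.
Qed.

Lemma SOT (T : (V * V)%type -> (V * V)%type) :
  bounded_op_sum ip T -> first_summand_invariant T ->
  forall x, hcvg_to ip (fun n => W n (T (Wadj n x))) (restr_first T x).
Proof.
move=> [hTl [M hM]] hinv x eps hep.
set B := restr_first T x.
have TB : T (x, 0) = (B, 0).
  by apply: injective_projections; [by [] | exact: hinv].
set K := `|M| + 1.
have K0 : 0 < K by rewrite /K ltr_pwDr // normr_ge0.
have [N1 h1] := W_first_cvg x (divr_gt0 hep (mulr_gt0 (ltr0Sn _ 1) K0)).
have [N2 h2] := W_first_cvg B (divr_gt0 hep (ltr0Sn _ 1)).
exists (N1 + N2)%N => n hNn.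
have hn1 : (N1 <= n)%N by apply: leq_trans hNn; exact: leq_addr.
have hn2 : (N2 <= n)%N by apply: leq_trans hNn; exact: leq_addl.
set w := Wadj n x - (x, 0).
have e1 : W n (T (Wadj n x)) - B = W n (T w) + (W n (B, 0) - B).
  rewrite /w (lin_sub hTl) TB (lin_sub (W_linear hH he htot n)).
  by rewrite addrA subrK.
rewrite e1; apply: le_lt_trans (hnD hip _ _) _.
have ew : hnorm (ip_sum ip) w = hn (W n (x, 0) - x).
  rewrite -(W_iso n) /w (lin_sub (W_linear hH he htot n)) (WK hH he htot).
  exact: hnBC.
have b1 : hn (W n (T w)) <= K * hn (W n (x, 0) - x).
  rewrite W_iso -ew; apply: le_trans (hM w) _.
  apply: ler_wpM2r; first exact: sqrtr_ge0.
  by rewrite /K; apply: le_trans (ler_norm M) _; rewrite lerDl.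
have b2 := h1 n hn1.
have b3 := h2 n hn2.
have hx := hn_ge0 ip (W n (x, 0) - x).
have : K * hn (W n (x, 0) - x) < eps / 2%:R.
  rewrite -(ltr_pM2l (mulr_gt0 (ltr0Sn _ 1) K0)) in b2.
  rewrite -(ltr_pM2l (ltr0Sn _ 1)).
  have E1 : 2%:R * K * (eps / (2%:R * K)) = eps.
    by rewrite mulrC divfK // mulf_neq0 ?pnatr_eq0 ?lt0r_neq0.
  have E2 : 2%:R * (eps / 2%:R) = eps by rewrite mulrC divfK // pnatr_eq0.
  by rewrite E1 in b2; rewrite E2 mulrA.
have hh : eps / 2%:R + eps / 2%:R = eps by field.
lra.
Qed.
End MainConv.

Section GS.
Variables (R : realType) (V : lmodType R[i]) (ip : V -> V -> R[i]).
Hypothesis hip : is_inner_product ip.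
Local Notation N := (N ip).
Local Notation hn := (hnorm ip).
Variable d : nat -> V.
Hypothesis hd : forall (x : V) (eps : R), 0 < eps -> exists n, hn (x - d n) < eps.
Hypothesis hinf : infinite_dimensional V.

Lemma dense_zero y : (forall m, ip y (d m) = 0) -> y = 0.
Proof.
move=> h; apply/eqP; apply/negP => /negP y0.
have hy := hn_gt0 hip y0.
have [m hm] := hd y hy.
have := CS hip y (y - d m); rewrite (ipBr hip) h subr0 -/(N y).
rewrite -(hn_sqr hip) expr2 => h1.
have : hn y * hn (y - d m) < hn y * hn y by rewrite ltr_pM2l.
by rewrite ltNge h1.
Qed.

Definition res (f : nat -> V) n m := d m - P ip f n (d m).

Definition newvec (f : nat -> V) n : V :=
  match pselect (exists m, res f n m != 0) with
  | left h => let m := ex_minn h in ((hn (res f n m))^-1)%:C *: res f n m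
  | right _ => 0
  end.

Lemma res_ext f g n : (forall k, (k < n)%N -> f k = g k) -> res f n = res g n.
Proof.
move=> h; apply: funext => m; rewrite /res /P /S; congr (_ - _).
by apply: eq_bigr => k _; rewrite h.
Qed.

Fixpoint E n : nat -> V :=
  match n with
  | 0 => fun _ => 0
  | n'.+1 => fun k => if (k < n')%N then E n' k else newvec (E n') n'
  end.

Definition gs k := E k.+1 k.

Lemma E_stable k dd : E (k.+1 + dd) k = gs k.
Proof.
elim: dd => [|dd IH]; first by rewrite addn0.
by rewrite addnS /= (leq_trans (ltnSn k)) ?leq_addr.
Qed.
Lemma E_gs n k : (k < n)%N -> E n k = gs k.
Proof. by move=> /subnKC <-; exact: E_stable. Qed.

Lemma gs_rec n : gs n = newvec gs n.
Proof.
rewrite /gs /= ltnn /newvec (res_ext (g := gs)) //.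
by move=> k kn; exact: E_gs.
Qed.

Lemma exists_res n : ortho_upto ip gs n -> exists m, res gs n m != 0.
Proof.
move=> ho; case: (pselect (exists m, res gs n m != 0)) => // hne.
exfalso; apply: hinf; exists n, (fun i : 'I_n => gs i) => x.
exists (fun k : 'I_n => ip x (gs k)).
have z : x - P ip gs n x = 0.
  apply: dense_zero => m.
  have hm : d m = P ip gs n (d m).
    apply/eqP; rewrite -subr_eq0; apply/negPn/negP => h; apply: hne; by exists m.
  rewrite hm /P (ip_S_r hip) big1 // => k _.
  by rewrite (ipP_e hip ho) // mulr0.
by apply/eqP; rewrite -subr_eq0; apply/eqP; exact: z.
Qed.

Lemma gs_step n : ortho_upto ip gs n -> exists m0,
  [/\ res gs n m0 != 0, forall m, res gs n m != 0 -> (m0 <= m)%N &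
      gs n = ((hn (res gs n m0))^-1)%:C *: res gs n m0].
Proof.
move=> ho; rewrite gs_rec /newvec; case: pselect => [h|h]; last first.
  by exfalso; apply: h; exact: exists_res.
case: ex_minnP => m0 h1 h2; exists m0; split => //.
Qed.

Lemma gs_ortho n : ortho_upto ip gs n.
Proof.
elim: n => [|n IH]; first by move=> i j.
have [m0 [r0 _ egs]] := gs_step IH.
set r := res gs n m0 in r0 egs.
have hr : 0 < hn r by exact: hn_gt0.
have orth : forall j, (j < n)%N -> ip (gs n) (gs j) = 0.
  by move=> j jn; rewrite egs (ipZl hip) /r /res (ipP_e hip IH) // mulr0.
move=> i j hi' hj'.
move: hi' hj'; rewrite ltnS [(i <= n)%N]leq_eqVlt ltnS [(j <= n)%N]leq_eqVlt.
move=> /orP[/eqP->|hi] /orP[/eqP->|hj].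
- rewrite eqxx egs (ipZl hip) (ipZr hip) cjR mulrA -rmorphM (ipxx hip) -rmorphM.
  rewrite -(hn_sqr hip) -expr2 exprVn mulVf //; exact: expf_neq0 (lt0r_neq0 hr).
- by rewrite orth // gtn_eqF.
- by rewrite (ipC hip) orth // cjE conjc0 ltn_eqF.
- exact: IH.
Qed.

Lemma gs_he i j : ip (gs i) (gs j) = (i == j)%:R.
Proof.
have h1 : (i < (maxn i j).+1)%N by rewrite ltnS leq_maxl.
have h2 : (j < (maxn i j).+1)%N by rewrite ltnS leq_maxr.
exact: (gs_ortho h1 h2).
Qed.

Definition inspan n m := res gs n m = 0.

Lemma inspan_S n m : inspan n m -> inspan n.+1 m.
Proof.
rewrite /inspan /res => /eqP; rewrite subr_eq0 => /eqP h.
have h0 : ip (d m) (gs n) = 0.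
  by rewrite h /P (ipS_e hip (@gs_ortho n.+1)) //= ltnn.
rewrite /P /S big_ord_recr /= h0 scale0r addr0.
by rewrite {1}h /P /S subrr.
Qed.

Lemma Q n m : (m < n)%N -> inspan n m.
Proof.
elim: n m => [//|n IH] m.
rewrite ltnS leq_eqVlt => /orP[/eqP->|hm]; last by apply: inspan_S; exact: IH.
case: (eqVneq (res gs n n) 0) => [h|h]; first by apply: inspan_S.
have [m0 [r0 hmin egs]] := gs_step (@gs_ortho n).
have m0n : m0 = n.
  apply/eqP; rewrite eqn_leq (hmin n h) /= leqNgt; apply/negP => lt.
  by move: r0; rewrite IH // eqxx.
subst m0.
set r := res gs n n in r0 egs.
have hr : 0 < hn r by exact: hn_gt0.
have er : r = (hn r)%:C *: gs n.
  by rewrite egs scalerA -rmorphM mulfV ?lt0r_neq0 // scale1r.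
have ed : d n = P ip gs n (d n) + r by rewrite /r /res addrC subrK.
have hdn : ip (d n) (gs n) = (hn r)%:C.
  rewrite {1}ed (ipDl hip) {1}er (ipZl hip) /P (ipS_e hip (@gs_ortho n.+1)) //= ltnn add0r.
  by rewrite gs_he eqxx mulr1.
rewrite /inspan /res /P /S big_ord_recr /= hdn -er.
by rewrite {1}ed /P /S subrr.
Qed.

Lemma gs_tot y : (forall k, ip y (gs k) = 0) -> y = 0.
Proof.
move=> h; apply: dense_zero => m.
have := Q (ltnSn m); rewrite /inspan /res => /eqP; rewrite subr_eq0 => /eqP ->.
rewrite /P (ip_S_r hip) big1 // => k _; by rewrite h mulr0.
Qed.
End GS.

Unset Implicit Arguments.

Theorem lemma3p9 (R : realType) (V : lmodType R[i]) (ip : V -> V -> R[i])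
  (hH : is_hilbert ip) (hsep : separable ip) (hinf : infinite_dimensional V)
  (T : (V * V)%type -> (V * V)%type)
  (hT : bounded_op_sum ip T) (hinv : first_summand_invariant T) :
  exists (W : nat -> (V * V)%type -> V) (Wadj : nat -> V -> (V * V)%type),
    (forall n : nat, unitary_sum_to ip (W n) (Wadj n)) /\
    forall x : V, hcvg_to ip (fun n => W n (T (Wadj n x))) (restr_first T x).
Proof.
have hip : is_inner_product ip := proj1 hH.
have [d hd] := hsep.
set e := gs ip d.
have he : forall i j, ip (e i) (e j) = (i == j)%:R := gs_he hip hd hinf.
have htot : forall y, (forall k, ip y (e k) = 0) -> y = 0 := gs_tot hip hd hinf.
exists (W ip e), (Wadj ip e); split.
- exact: (W_unitary hH he htot).
- exact: (SOT hH he htot hT hinv).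
Qed.
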